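(* Let $G$ be a graph without isolated vertices and let $T$ be a solution counting decision tree for $\varphi(G)$. Let $u$ be a node of $T$ labelled by a variable $x$, and let $S\subseteq V(G)$ be such that no two elements of $S$ are adjacent or have a common neighbour in $G$, and no element of $S$ is forced to $1$ by $A_u$. Then $weight(\mathbf{P}^u(S))\leq \alpha^u(S)$.
   Context: $\varphi(G)$ is the CNF on variables $V(G)$ with clauses $(u\vee v)$ for all $\{u,v\}\in E(G)$. Boolean functions are identified with their sets of satisfying assignments (sets of literals); for a set $S$ of literals, the restriction $F|_S$ is the function on the remaining variables whose satisfying assignments are those $S'$ with $S\cup S'$ satisfying $F$. Decision tree for a function $F$ that is not constant false: the root is labelled by some variable $x\in Var(F)$; for each literal $\ell\in\{x,\neg x\}$ occurring in some satisfying assignment of $F$, the root has an outgoing edge labelled $\ell$; if $|Var(F)|=1$ its head is an unlabelled leaf, otherwise its head is the root of a decision tree for $F|_\ell$. A solution counting decision tree (SCDT) for $F$ is a decision tree for $F$ in which an edge leaving node $w$ labelled by literal $\ell$ has weight $|F|_{A_w\cup\{\ell\}}|/|F|_{A_w}|$, where $A_w$ is the set of literals labelling the root-$w$ path. The weight of a path is the product of its edge weights, and the weight of a set of paths is the sum of their weights. A variable $y\in V(G)$ is forced to $1$ by $A_u$ if some neighbour $z$ of $y$ in $G$ satisfies $\neg z\in A_u$. $N^u(y)$ is the set of neighbours $z$ of $y$ such that $z$ does not occur in $A_u$ and $z$ is not forced to $1$ by $A_u$. For $d\geq 0$, $c_d=1-2^{-(2d+1)}$, and for $S\subseteq V(G)$,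 $\alpha^u(S)=\prod_{y\in S}c_{|N^u(y)|}$. Identifying $S$ with the set of positive literals of its elements, $\mathbf{P}^u(S)$ is the set of paths $P$ of $T$ from $u$ to a leaf such that $S\subseteq A(P)$, where $A(P)$ is the set of literals labelling the edges of $P$. *)

(* Defs.v *)
(* Weights are rationals (all quantities involved are rational). *)
From mathcomp Require Import all_boot all_order all_algebra.
Set Implicit Arguments. Unset Strict Implicit. Unset Printing Implicit Defensive.
Import Order.TTheory GRing.Theory Num.Theory.
Local Open Scope ring_scope.

Section Defs.
Variable V : finType.

(* a literal is a pair (variable, polarity): (x,true) = x, (x,false) = ~x *)
Definition lit := (V * bool)%type.

Definition simple_graph (e : rel V) : Prop := symmetric e /\ irreflexive e.
Definition no_isolated (e : rel V) : Prop := forall v, exists w, e v w.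

Definition sat_phi (e : rel V) (s : {ffun V -> bool}) : bool :=
  [forall u, forall v, e u v ==> (s u || s v)].

Definition consistent (s : {ffun V -> bool}) (A : seq lit) : bool :=
  all (fun l => s l.1 == l.2) A.

(* |phi(G)|_A| : number of satisfying assignments of the restriction of phi(G)
   by the (consistent) literal set A, i.e. number of satisfying total
   assignments of phi(G) extending A *)
Definition cnt (e : rel V) (A : seq lit) : nat :=
  #|[set s : {ffun V -> bool} | sat_phi e s && consistent s A]|.

Definition occurs (z : V) (A : seq lit) : bool := has (fun l => l.1 == z) A.

(* Var(phi(G)|_A) = V(G) minus the variables of A *)
Definition nvars (A : seq lit) : nat := #|[set v : V | ~~ occurs v A]|.

End Defs.

(* decision trees: a node labelled x has an optional edge labelled ~x (first
   child) and an optional edge labelled x (second child); None = no edge. *)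
Inductive dtree (V : Type) : Type :=
| Leaf
| Node of V & option (dtree V) & option (dtree V).
Arguments Leaf {V}.

Section Trees.
Variable V : finType.
Variable e : rel V.

(* is_dt A t : t is a decision tree for phi(G)|_A (which must not be constant
   false); A is the set of literals on the path from the root. *)
Fixpoint is_dt (A : seq (lit V)) (t : dtree V) : Prop :=
  match t with
  | Leaf => False
  | Node x c0 c1 =>
      (0 < cnt e A)%N /\ ~~ occurs x A /\
      (c0 <> None <-> (0 < cnt e ((x, false) :: A))%N) /\
      (c1 <> None <-> (0 < cnt e ((x, true) :: A))%N) /\
      match c0 with
      | Some t0 => if nvars A == 1%N then t0 = Leaf else is_dt ((x, false) :: A) t0
      | None => True end /\
      match c1 with
      | Some t1 => if nvars A == 1%N then t1 = Leaf else is_dt ((x, true) :: A) t1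
      | None => True end
  end.

Definition child (t : dtree V) (b : bool) : option (dtree V) :=
  match t with Leaf => None | Node _ c0 c1 => if b then c1 else c0 end.

Fixpoint subtree (t : dtree V) (p : seq bool) : option (dtree V) :=
  match p with
  | [::] => Some t
  | b :: p' => match child t b with Some t' => subtree t' p' | None => None end
  end.

Fixpoint path_lits (t : dtree V) (p : seq bool) : seq (lit V) :=
  match p, t with
  | b :: p', Node x _ _ =>
      (x, b) :: match child t b with Some t' => path_lits t' p' | None => [::] end
  | _, _ => [::]
  end.

Fixpoint leaf_paths (t : dtree V) : seq (seq bool) :=
  match t with
  | Leaf => [:: [::]]
  | Node _ c0 c1 =>
      map (cons false) (if c0 is Some t0 then leaf_paths t0 else [::]) ++
      map (cons true)  (if c1 is Some t1 then leaf_paths t1 else [::])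
  end.

(* SCDT weight of the path p from the node t, where A is the set of literals
   labelling the path from the root of the whole tree to t: product of the
   edge weights |F|_{A_w u {l}}| / |F|_{A_w}|. *)
Fixpoint pweight (A : seq (lit V)) (t : dtree V) (p : seq bool) : rat :=
  match p, t with
  | b :: p', Node x _ _ =>
      ((cnt e ((x, b) :: A))%:R / (cnt e A)%:R) *
      match child t b with Some t' => pweight ((x, b) :: A) t' p' | None => 0 end
  | _, _ => 1
  end.

Definition forced (A : seq (lit V)) (y : V) : bool :=
  [exists z, e y z && ((z, false) \in A)].

Definition Nu (A : seq (lit V)) (y : V) : {set V} :=
  [set z | e y z && ~~ occurs z A && ~~ forced A z].

Definition cd (d : nat) : rat := 1 - (2 ^+ (2 * d + 1))^-1.

Definition alpha (A : seq (lit V)) (S : {set V}) : rat :=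
  \prod_(y in S) cd #|Nu A y|.

Definition weightP (T : dtree V) (pu : seq bool) (S : {set V}) : rat :=
  match subtree T pu with
  | Some tu =>
      \sum_(q <- leaf_paths tu | [forall y in S, (y, true) \in path_lits tu q])
        pweight (path_lits T pu) tu q
  | None => 0
  end.

End Trees.

(* Main.v *)
Require Import Defs.
From mathcomp Require Import all_boot all_order all_algebra.
From mathcomp Require Import zify ring lra.
Set Implicit Arguments. Unset Strict Implicit. Unset Printing Implicit Defensive.
Import Order.TTheory GRing.Theory Num.Theory.
Local Open Scope ring_scope.


Fixpoint dsize (V : Type) (t : dtree V) : nat :=
  match t with
  | Leaf => 0
  | Node _ c0 c1 => ((match c0 with Some t0 => dsize t0 | None => 0 end) +
                     (match c1 with Some t1 => dsize t1 | None => 0 end)).+1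
  end.

Lemma cnt_perm (V : finType) (e : rel V) A B : perm_eq A B -> cnt e A = cnt e B.
Proof.
move=> pAB; apply: eq_card => s; rewrite !inE /consistent (perm_all _ pAB) //.
Qed.

Lemma occurs_perm (V : finType) (z : V) A B : perm_eq A B -> occurs z A = occurs z B.
Proof. by move=> pAB; rewrite /occurs (perm_has _ pAB). Qed.

Lemma nvars_perm (V : finType) (A B : seq (lit V)) : perm_eq A B -> nvars A = nvars B.
Proof. by move=> pAB; apply: eq_card => v; rewrite !inE (occurs_perm _ pAB). Qed.

Lemma is_dt_perm (V : finType) (e : rel V) n : forall (t : dtree V), (dsize t < n)%N ->
  forall A B, perm_eq A B -> is_dt e A t -> is_dt e B t.
Proof.
elim: n => // n IH [//|x c0 c1] /= Hs A B pAB [Hc [Hx [H0 [H1 [Hc0 Hc1]]]]].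
have pf : forall b, perm_eq ((x, b) :: A) ((x, b) :: B) by move=> b; rewrite perm_cons.
rewrite -(cnt_perm _ pAB) -(occurs_perm _ pAB) -(nvars_perm pAB)
  -(cnt_perm _ (pf false)) -(cnt_perm _ (pf true)).
do 4 (split => //).
  split.
  case: c0 Hs {H0} Hc0 => [t0|//] Hs; case: ifP => // _ Hcc; apply: (IH _ _ ((x, false) :: A) _ (pf false) Hcc).
  by rewrite ltnS in Hs; apply: leq_ltn_trans Hs; exact: leq_addr.
case: c1 Hs {H1} Hc1 => [t1|//] Hs; case: ifP => // _ Hcc; apply: (IH _ _ ((x, true) :: A) _ (pf true) Hcc).
by rewrite ltnS in Hs; apply: leq_ltn_trans Hs; exact: leq_addl.
Qed.

Lemma subtree_dt (V : finType) (e : rel V) : forall p (T : dtree V) A x c0 c1,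
  is_dt e A T -> subtree T p = Some (Node x c0 c1) ->
  is_dt e (rev (path_lits T p) ++ A) (Node x c0 c1).
Proof.
elim => [|b p IH] T A x c0 c1 HT /=; first by case=> Heq; rewrite Heq in HT.
case: T HT => [//|y d0 d1] /= [_ [_ [_ [_ [Hd0 Hd1]]]]].
have Hleaf : forall q, subtree (@Leaf V) q <> Some (Node x c0 c1) by case.
case: b.
  case: d1 Hd1 => // t1; case: ifP => _ Ht; first by subst t1 => /Hleaf.
  by move=> Hs; rewrite rev_cons cat_rcons; apply: IH.
case: d0 Hd0 => // t0; case: ifP => _ Ht; first by subst t0 => /Hleaf.
by move=> Hs; rewrite rev_cons cat_rcons; apply: IH.
Qed.



Definition Cs (V : finType) (S : {set V}) (L : seq (lit V)) : bool :=
  [forall y in S, (y, true) \in L].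

Definition cntS (V : finType) (e : rel V) (A : seq (lit V)) (S : {set V}) : nat :=
  #|[set s : {ffun V -> bool} | sat_phi e s && consistent s A &&
      [forall y in S, s y && ~~ occurs y A]]|.

Lemma cntS_le (V : finType) (e : rel V) A S : (cntS e A S <= cnt e A)%N.
Proof.
apply: subset_leq_card; apply/subsetP => s; rewrite !inE.
by case/andP => /andP[-> ->].
Qed.

Lemma cntS_split (V : finType) (e : rel V) A x S : ~~ occurs x A ->
  cntS e A S = (cntS e ((x, false) :: A) S + cntS e ((x, true) :: A) (S :\ x))%N.
Proof.
move=> Hx; rewrite /cntS.
rewrite -(cardsID [set s : {ffun V -> bool} | s x]) addnC; congr (_ + _);
  apply: eq_card => s; rewrite !inE /consistent /= -/(consistent s A).
- case sx: (s x) => /=; first by rewrite andbF.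
  congr (_ && _).
  apply/forallP/forallP => H y; move: (H y); case: (eqVneq x y) => [<-|_] //=; by rewrite sx /= ?andbF.
- case sx: (s x) => /=; last by rewrite !andbF.
  rewrite andbT; congr (_ && _).
  apply/forallP/forallP => H y; move: (H y); rewrite !inE; case: (eqVneq x y) => [<-|_] //=.
  by rewrite sx (negbTE Hx) implybT.
Qed.

Lemma occurs_cons (V : finType) (z : V) (l : lit V) A :
  occurs z (l :: A) = (l.1 == z) || occurs z A.
Proof. by []. Qed.

Lemma nvars1 (V : finType) (A : seq (lit V)) x : nvars A == 1%N -> ~~ occurs x A ->
  forall y, y != x -> occurs y A.
Proof.
move=> /eqP H1 Hx y yx; apply/negPn/negP => Hy.
have : (#|[set x; y]| <= nvars A)%N.
  apply: subset_leq_card; apply/subsetP => z; rewrite !inE.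
  by case/orP => /eqP ->.
by rewrite cards2 eq_sym yx H1.
Qed.

Lemma leaf_cntS (V : finType) (e : rel V) A x S b : nvars A == 1%N -> ~~ occurs x A ->
  cntS e ((x, b) :: A) (if b then S :\ x else S) = (Cs S [:: (x, b)] * cnt e ((x, b) :: A))%N.
Proof.
move=> H1 Hx.
have HF : forall s : {ffun V -> bool},
    [forall y in (if b then S :\ x else S), s y && ~~ occurs y ((x, b) :: A)] = Cs S [:: (x, b)].
  move=> s; rewrite /Cs; apply/forallP/forallP => H y; move: (H y);
    rewrite occurs_cons mem_seq1 xpair_eqE; case: b H => H; rewrite ?in_setD1 /=;
    case: (eqVneq y x) => [->|yx]; case: (_ \in S) => //=;
    rewrite ?eqxx ?(nvars1 H1 Hx yx) ?andbF ?orbT //=.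
rewrite /cntS /cnt; case HC: (Cs S [:: (x, b)]).
  by rewrite mul1n; apply: eq_card => s; rewrite !inE HF HC andbT.
rewrite mul0n; apply/eqP; rewrite cards_eq0; apply/eqP/setP => s.
by rewrite !inE HF HC andbF.
Qed.

Lemma Cs_true (V : finType) (S : {set V}) x L : Cs S ((x, true) :: L) = Cs (S :\ x) L.
Proof.
rewrite /Cs; apply/forallP/forallP => H y; move: (H y); rewrite in_setD1 in_cons xpair_eqE andbT.
  by case: (eqVneq y x) => //= _; case: (y \in S).
by case: (eqVneq y x) => //= _; case: (y \in S).
Qed.

Lemma Cs_false (V : finType) (S : {set V}) x L : Cs S ((x, false) :: L) = Cs S L.
Proof. by rewrite /Cs; apply: eq_forallb => y; rewrite in_cons xpair_eqE andbF. Qed.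

Lemma weight_eq (V : finType) (e : rel V) n : forall (t : dtree V), (dsize t < n)%N ->
  forall A, is_dt e A t -> forall S,
  \sum_(q <- leaf_paths t | Cs S (path_lits t q)) pweight e A t q =
  (cntS e A S)%:R / (cnt e A)%:R.
Proof.
elim: n => // n IH [//|x c0 c1] Hs A HA S.
move: HA => /= [Hc [Hx [H0 [H1 [Hc0 Hc1]]]]].
rewrite big_cat /= !big_map (cntS_split e S Hx) natrD mulrDl.
have cA : (cnt e A)%:R != 0 :> rat by rewrite pnatr_eq0 -lt0n.
congr (_ + _).
- case: c0 Hs H0 Hc0 => [t0|] Hs H0 Hc0 /=.
  + have c0p : (0 < cnt e ((x, false) :: A))%N by apply/H0.
    have cB : (cnt e ((x, false) :: A))%:R != 0 :> rat by rewrite pnatr_eq0 -lt0n.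
    move: Hc0; case: ifP => Hn Hc0.
    * subst t0; rewrite /= big_cons big_nil /= (leaf_cntS e S false Hn Hx).
      by case: (Cs _ _); rewrite ?mul1n ?mul0n ?mulr1 ?addr0 ?mul0r.
    * rewrite (eq_bigl _ _ (fun j => Cs_false S x _)) -big_distrr /=.
      rewrite (IH t0 _ _ Hc0 S); last first.
        by move: Hs; rewrite /= !ltnS; apply: leq_trans; apply: leq_addr.
      by field; apply/andP.
  + have cz : cnt e ((x, false) :: A) = 0%N.
      by case: (posnP (cnt e ((x, false) :: A))) => // /H0.
    have := cntS_le e ((x, false) :: A) S; rewrite cz leqn0 => /eqP ->.
    by rewrite big_nil mul0r.
- case: c1 Hs H1 Hc1 => [t1|] Hs H1 Hc1 /=.
  + have c1p : (0 < cnt e ((x, true) :: A))%N by apply/H1.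
    have cB : (cnt e ((x, true) :: A))%:R != 0 :> rat by rewrite pnatr_eq0 -lt0n.
    move: Hc1; case: ifP => Hn Hc1.
    * subst t1; rewrite /= big_cons big_nil /= (leaf_cntS e S true Hn Hx).
      by case: (Cs _ _); rewrite ?mul1n ?mul0n ?mulr1 ?addr0 ?mul0r.
    * rewrite (eq_bigl _ _ (fun j => Cs_true S x _)) -big_distrr /=.
      rewrite (IH t1 _ _ Hc1 (S :\ x)); last first.
        by move: Hs; rewrite /= !ltnS; apply: leq_trans; apply: leq_addl.
      by field; apply/andP.
  + have cz : cnt e ((x, true) :: A) = 0%N.
      by case: (posnP (cnt e ((x, true) :: A))) => // /H1.
    have := cntS_le e ((x, true) :: A) (S :\ x); rewrite cz leqn0 => /eqP ->.
    by rewrite big_nil mul0r.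
Qed.




Definition Xs (V : finType) (e : rel V) (P : seq (lit V)) (S : {set V}) :=
  [set s : {ffun V -> bool} | sat_phi e s && consistent s P && [forall y in S, s y]].

Lemma cons_lit (V : finType) (s : {ffun V -> bool}) P z b :
  consistent s P -> (z, b) \in P -> s z = b.
Proof. by move=> /allP H /H /eqP. Qed.

Lemma forced_nb (V : finType) (e : rel V) P (s : {ffun V -> bool}) y z :
  sat_phi e s -> consistent s P -> ~~ forced e P y -> e y z -> z \notin Nu e P y ->
  s z.
Proof.
move=> Hs Hc Hy eyz; rewrite inE eyz /= negb_and !negbK => /orP[].
  case/hasP => [[z' b] Hl /= /eqP Ez]; subst z'.
  case: b Hl => Hl; first by rewrite (cons_lit Hc Hl).
  by case/negP: Hy; apply/existsP; exists z; rewrite eyz.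
case/existsP => w /andP[ezw Hw].
have sw := cons_lit Hc Hw.
by move/forallP: Hs => /(_ z) /forallP /(_ w); rewrite ezw sw orbF.
Qed.

Lemma key_split (V : finType) (e : rel V) P y S0 :
  #|Xs e P S0| = (#|Xs e P (y |: S0)| +
     #|[set s in Xs e P S0 | ~~ s y]|)%N.
Proof.
rewrite -(cardsID [set s : {ffun V -> bool} | s y] (Xs e P S0)); congr (_ + _).
  apply: eq_card => s; rewrite !inE.
  case sy: (s y); rewrite ?andbF ?andbT //.
    congr (_ && _); apply/forallP/forallP => H z; move: (H z); rewrite !inE.
      by case: (eqVneq z y) => [->|] //=; rewrite sy implybT.
    by case: (z \in S0); rewrite ?orbT.
  apply/esym/negbTE/negP => /andP[_ /forallP /(_ y)]; by rewrite !inE eqxx sy.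
by apply: eq_card => s; rewrite !inE andbC.
Qed.

Definition fmap (V : finType) (e : rel V) y (s : {ffun V -> bool}) : {ffun V -> bool} :=
  [ffun v => if v == y then false else if e y v then true else s v].

Lemma fmap_in (V : finType) (e : rel V) P y (S0 : {set V}) s :
  simple_graph e -> y \notin S0 -> ~~ occurs y P -> ~~ forced e P y ->
  s \in Xs e P (y |: S0) -> fmap e y s \in [set s in Xs e P S0 | ~~ s y].
Proof.
move=> [esym eirr] yS0 Hyo Hyf; rewrite !inE => /andP[/andP[Hs Hc] HS].
rewrite /fmap ffunE eqxx andbT; apply/andP; split; first (apply/andP; split).
- apply/forallP => u; apply/forallP => v; apply/implyP => euv; rewrite !ffunE.
  case: (eqVneq u y) => [Eu|uy].
    subst u; case: (eqVneq v y) => [Ev|vy]; first by subst v; rewrite eirr in euv.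
    by rewrite euv.
  case: (eqVneq v y) => [Ev|vy]; first by subst v; rewrite esym euv.
  move/forallP: Hs => /(_ u) /forallP /(_ v); rewrite euv /=.
  by case: (e y u); case: (e y v); rewrite ?orbT.
- apply/allP => [[z b]] Hl /=; rewrite ffunE.
  case: (eqVneq z y) => [Ez|zy].
    by subst z; case/negP: Hyo; apply/hasP; exists (y, b).
  case eyz: (e y z); last exact: (allP Hc _ Hl).
  case: b Hl => Hl //; case/negP: Hyf; apply/existsP; exists z; by rewrite eyz.
- apply/forallP => z; apply/implyP => zS; rewrite ffunE.
  case: (eqVneq z y) => [Ez|zy]; first by subst z; rewrite zS in yS0.
  move/forallP: HS => /(_ z); rewrite !inE zS orbT /= => ->.
  by case: (e y z).
Qed.

Lemma fiber_bound (V : finType) (e : rel V) P y (S0 : {set V}) s' :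
  ~~ forced e P y ->
  (#|[set s in Xs e P (y |: S0) | fmap e y s == s']| <= 2 ^ #|Nu e P y|)%N.
Proof.
move=> Hyf.
set D := [set s in Xs e P (y |: S0) | fmap e y s == s'].
pose g := fun s : {ffun V -> bool} => Nu e P y :&: [set z | s z].
rewrite -(@card_in_imset _ _ g D); last first.
  move=> s1 s2; rewrite !inE => /andP[/andP[/andP[Hs1 Hc1] HS1] /eqP Hf1].
  move=> /andP[/andP[/andP[Hs2 Hc2] HS2] /eqP Hf2] Hg.
  apply/ffunP => v.
  case: (eqVneq v y) => [->|vy].
    move/forallP: HS1 => /(_ y); move/forallP: HS2 => /(_ y).
    by rewrite !inE eqxx /= => -> ->.
  case eyv: (e y v); last first.
    have := congr1 (fun f : {ffun V -> bool} => f v) (etrans Hf1 (esym Hf2)).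
    by rewrite /fmap !ffunE (negbTE vy) eyv.
  case vN: (v \in Nu e P y).
    have := congr1 (fun A : {set V} => v \in A) Hg.
    rewrite /g !inE -!andbA.
    by move: vN; rewrite inE -!andbA => /and3P[-> -> ->].
  by rewrite (forced_nb Hs1 Hc1 Hyf eyv) ?vN // (forced_nb Hs2 Hc2 Hyf eyv) ?vN.
rewrite -card_powerset; apply: subset_leq_card; apply/subsetP => _ /imsetP [s _ ->].
by rewrite powersetE /g subsetIl.
Qed.

Lemma key_bound (V : finType) (e : rel V) P y (S0 : {set V}) :
  simple_graph e -> y \notin S0 -> ~~ occurs y P -> ~~ forced e P y ->
  (#|Xs e P (y |: S0)| <= 2 ^ #|Nu e P y| * #|[set s in Xs e P S0 | ~~ s y]|)%N.
Proof.
move=> Hg yS0 Hyo Hyf.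
rewrite -sum1_card (partition_big (fmap e y) (mem [set s in Xs e P S0 | ~~ s y])) /=;
  last by move=> s Hs; apply: fmap_in.
rewrite mulnC -sum_nat_const; apply: leq_sum => s' _.
rewrite sum1_card; apply: leq_trans (fiber_bound S0 s' Hyf).
apply: subset_leq_card; apply/subsetP => s; rewrite unfold_in !inE; exact: id.
Qed.



Lemma cd_ge0 d : 0 <= cd d.
Proof.
rewrite /cd subr_ge0 invf_le1 ?exprn_ege1 ?exprn_gt0 //.
Qed.

Lemma cd_bound d (a b : nat) : ((2 ^ d).+1 * a <= 2 ^ d * b)%N ->
  a%:R <= cd d * b%:R :> rat.
Proof.
move=> H.
have {}H : ((2 ^+ d : rat) + 1) * a%:R <= 2 ^+ d * b%:R.
  by move: H; rewrite -(ler_nat rat) !natrM -addn1 natrD natrX.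
set K : rat := 2 ^+ d in H *.
have K1 : 1 <= K by rewrite /K exprn_ege1.
have E : (2 : rat) ^+ (2 * d + 1) = 2 * K ^+ 2 by rewrite exprD expr1 mulnC exprM mulrC.
rewrite /cd E.
have b0 : 0 <= (b%:R : rat) by [].
have K0 : 0 < K + 1 by lra.
have Q0 : 0 < 2 * K ^+ 2 by nra.
have h1 : b%:R * (2 * K ^+ 2)^-1 <= b%:R / (K + 1).
  apply: ler_wpM2l => //; rewrite lef_pV2 ?posrE //; nra.
have h2 : a%:R <= K * b%:R / (K + 1) by rewrite ler_pdivlMr // mulrC.
have h3 : K * b%:R / (K + 1) + b%:R / (K + 1) = b%:R.
  by field; rewrite lt0r_neq0.
rewrite mulrBl mul1r mulrC; lra.
Qed.

Lemma N_bound (V : finType) (e : rel V) P : simple_graph e -> forall S : {set V},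
  (forall y, y \in S -> ~~ occurs y P /\ ~~ forced e P y) ->
  (#|Xs e P S|)%:R <= alpha e P S * (cnt e P)%:R.
Proof.
move=> Hg S; elim: {S}_.+1 {-2}S (ltnSn #|S|) => // n IH S HS Hy.
case: (set_0Vmem S) => [->|[y yS]].
  have -> : #|Xs e P set0| = cnt e P.
    by apply: eq_card => s; rewrite !inE; rewrite (_ : [forall y in set0, s y] = true) ?andbT //; apply/forallP => z; rewrite inE.
  by rewrite /alpha big_set0 mul1r.
have [Hyo Hyf] := Hy y yS.
have yS0 : y \notin S :\ y by rewrite !inE eqxx.
have H1 := key_split e P y (S :\ y).
have H2 := key_bound Hg yS0 Hyo Hyf.
rewrite setD1K // in H1 H2.
have H3 : ((2 ^ #|Nu e P y|).+1 * #|Xs e P S| <= 2 ^ #|Nu e P y| * #|Xs e P (S :\ y)|)%N.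
  by rewrite H1 mulnDr mulSn addnC leq_add2l.
apply: le_trans (cd_bound H3) _.
rewrite /alpha (big_setD1 y yS) /= -mulrA; apply: ler_wpM2l; first exact: cd_ge0.
apply: IH.
  by rewrite -ltnS; apply: leq_trans HS; rewrite ltnS (cardsD1 y S) yS.
by move=> z; rewrite inE => /andP[_ /Hy].
Qed.

Theorem theorem6 (V : finType) (e : rel V)
  (Hg : simple_graph e) (Hiso : no_isolated e)
  (T : dtree V) (HT : is_dt e [::] T)
  (pu : seq bool) (x : V) (c0 c1 : option (dtree V))
  (Hu : subtree T pu = Some (Node x c0 c1))
  (S : {set V})
  (HS : forall y1 y2, y1 \in S -> y2 \in S -> y1 != y2 ->
          ~~ e y1 y2 /\ (forall z, ~~ (e y1 z && e y2 z)))
  (Hnf : forall y, y \in S -> ~~ forced e (path_lits T pu) y) :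
  weightP e T pu S <= alpha e (path_lits T pu) S.
Proof.
rewrite /weightP Hu.
have Hdt0 := subtree_dt HT Hu; rewrite cats0 in Hdt0.
have pr : perm_eq (rev (path_lits T pu)) (path_lits T pu) by rewrite perm_rev.
have Hdt := is_dt_perm (ltnSn _) pr Hdt0.
rewrite (weight_eq (ltnSn _) Hdt).
set P := path_lits T pu in Hnf Hdt *.
have cpos : (0 < cnt e P)%N by case: Hdt.
rewrite ler_pdivrMr ?ltr0n //.
case: (boolP [exists y in S, occurs y P]) => Hex.
  have -> : cntS e P S = 0%N.
    case/existsP: Hex => y /andP[yS yo].
    apply/eqP; rewrite cards_eq0; apply/eqP/setP => s; rewrite !inE.
    apply/negbTE; rewrite negb_and; apply/orP; right; apply/forallP => /(_ y).
    by rewrite yS yo andbF.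
  by apply: mulr_ge0 => //; apply: prodr_ge0 => i _; apply: cd_ge0.
have -> : cntS e P S = #|Xs e P S|.
  apply: eq_card => s; rewrite !inE; congr (_ && _); apply: eq_forallb => y.
  case yS: (y \in S) => //=.
  have : ~~ occurs y P by apply: contra Hex => yo; apply/existsP; exists y; rewrite yS.
  by move=> /negbTE ->; rewrite andbT.
apply: N_bound => // y yS; split; last exact: Hnf.
by apply: contra Hex => yo; apply/existsP; exists y; rewrite yS.
Qed.
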